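(* Let $\Omega_2=\{(x,y)\in\mathbb{R}^2: x\neq0,\ y<x^{-2}\sin(x^2)\}\cup\{(0,y):y<1\}$. Then $\Omega_2$ is a $C^\infty$ domain which has a uniformly $C^2$ defining function (in particular $\partial\Omega_2$ has positive reach), but $\Omega_2$ has no uniformly $C^3$ defining function.
   Context: A $C^m$ defining function for an open set $\Omega\subset\mathbb{R}^n$ is a real-valued $C^m$ function $\rho$ on an open neighborhood $U$ of $\partial\Omega$ with $\{x\in U:\rho<0\}=\Omega\cap U$ and $\nabla\rho\neq0$ on $\partial\Omega$. It is uniformly $C^m$ if $\operatorname{dist}(\partial\Omega,\partial U)>0$, $\sup_{U}\sum_{|\alpha|\le m}|\partial^\alpha\rho|<\infty$, and $\inf_U|\nabla\rho|>0$. Reach: with $\operatorname{Unp}(\partial\Omega)$ the set of points having a unique nearest point in $\partial\Omega$, $\operatorname{reach}(\partial\Omega)=\inf_{y\in\partial\Omega}\sup\{r\ge0:B(y,r)\subset\operatorname{Unp}(\partial\Omega)\}$. *)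

(* Defs.v *)
From Stdlib Require Import Reals.
Open Scope R_scope.

Definition pt : Type := (R * R)%type.

Definition dist (p q : pt) : R :=
  sqrt ((fst p - fst q) ^ 2 + (snd p - snd q) ^ 2).

Definition open_set (U : pt -> Prop) : Prop :=
  forall p, U p -> exists e, 0 < e /\ forall q, dist p q < e -> U q.

Definition connected (S : pt -> Prop) : Prop :=
  forall A B : pt -> Prop, open_set A -> open_set B ->
    (forall p, S p -> A p \/ B p) ->
    (forall p, S p -> A p -> B p -> False) ->
    (forall p, S p -> ~ A p) \/ (forall p, S p -> ~ B p).

Definition domain (S : pt -> Prop) : Prop :=
  open_set S /\ connected S /\ exists p, S p.

Definition boundary (S : pt -> Prop) (p : pt) : Prop :=
  forall e, 0 < e ->
    (exists q, S q /\ dist p q < e) /\ (exists q, ~ S q /\ dist p q < e).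

Definition continuous_on (U : pt -> Prop) (f : pt -> R) : Prop :=
  forall p, U p -> forall eps, 0 < eps -> exists delta, 0 < delta /\
    forall q, U q -> dist p q < delta -> Rabs (f q - f p) < eps.

Definition bounded_on (U : pt -> Prop) (f : pt -> R) : Prop :=
  exists M, forall p, U p -> Rabs (f p) <= M.

Definition partial_x (f : pt -> R) (p : pt) (l : R) : Prop :=
  derivable_pt_lim (fun t => f (t, snd p)) (fst p) l.
Definition partial_y (f : pt -> R) (p : pt) (l : R) : Prop :=
  derivable_pt_lim (fun t => f (fst p, t)) (snd p) l.

(* CmB b m U f : f is C^m on U (all partial derivatives of order <= m exist
   and are continuous on U); if b = true, moreover all of them are bounded
   on U. *)
Fixpoint CmB (b : bool) (m : nat) (U : pt -> Prop) (f : pt -> R) : Prop :=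
  continuous_on U f /\ (b = true -> bounded_on U f) /\
  match m with
  | O => True
  | S k => exists fx fy : pt -> R,
      (forall p, U p -> partial_x f p (fx p) /\ partial_y f p (fy p)) /\
      CmB b k U fx /\ CmB b k U fy
  end.

Definition Cm (m : nat) (U : pt -> Prop) (f : pt -> R) : Prop := CmB false m U f.
Definition Cinf (U : pt -> Prop) (f : pt -> R) : Prop := forall m, Cm m U f.

Definition defining_fun (reg : (pt -> Prop) -> (pt -> R) -> Prop)
    (Om U : pt -> Prop) (rho : pt -> R) : Prop :=
  open_set U /\ (forall p, boundary Om p -> U p) /\ reg U rho /\
  (forall p, U p -> (rho p < 0 <-> Om p)) /\
  (forall p, boundary Om p -> exists gx gy,
      partial_x rho p gx /\ partial_y rho p gy /\ (gx <> 0 \/ gy <> 0)).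

Definition uniform_defining_fun (m : nat) (Om U : pt -> Prop) (rho : pt -> R) : Prop :=
  defining_fun (Cm m) Om U rho /\
  (exists d, 0 < d /\ forall p q, boundary Om p -> boundary U q -> d <= dist p q) /\
  CmB true m U rho /\
  (exists c, 0 < c /\ forall p gx gy, U p -> partial_x rho p gx -> partial_y rho p gy ->
      c <= sqrt (gx ^ 2 + gy ^ 2)).

Definition Unp (S : pt -> Prop) (x : pt) : Prop :=
  exists! y, S y /\ forall z, S z -> dist x y <= dist x z.

(* reach(S) > 0, i.e. inf_{y in S} sup {r >= 0 : B(y,r) ⊂ Unp(S)} > 0 *)
Definition positive_reach (S : pt -> Prop) : Prop :=
  exists r, 0 < r /\ forall y, S y -> forall x, dist y x < r -> Unp S x.

Definition Omega2 (p : pt) : Prop :=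
  (fst p <> 0 /\ snd p < sin (fst p ^ 2) / fst p ^ 2) \/
  (fst p = 0 /\ snd p < 1).

(* Main.v *)
From Coquelicot Require Import Coquelicot Derive_2d.
From Stdlib Require Import Reals Lra Lia FunctionalExtensionality ClassicalEpsilon Classical.
Require Import Defs.
Open Scope R_scope.

Lemma d_plus (f g : R -> R) (x a b : R) : is_derive f x a -> is_derive g x b ->
  is_derive (fun t => f t + g t) x (a + b).
Proof. intros H1 H2. exact (is_derive_plus f g x a b H1 H2). Qed.
Lemma d_mult (f g : R -> R) (x a b : R) : is_derive f x a -> is_derive g x b ->
  is_derive (fun t => f t * g t) x (a * g x + f x * b).
Proof. intros H1 H2. exact (is_derive_mult f g x a b H1 H2 Rmult_comm). Qed.
Lemma d_comp (f g : R -> R) (x a b : R) : is_derive f (g x) a -> is_derive g x b ->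
  is_derive (fun t => f (g t)) x (b * a).
Proof. intros H1 H2. exact (is_derive_comp f g x a b H1 H2). Qed.
Lemma d_const (c x : R) : is_derive (fun _ : R => c) x 0.
Proof. exact (@is_derive_const R_AbsRing R_NormedModule c x). Qed.
Lemma d_id (x : R) : is_derive (fun t => t) x 1.
Proof. exact (@is_derive_id R_AbsRing x). Qed.
Lemma d_ext (f g : R -> R) (x a b : R) : (forall t, f t = g t) -> a = b -> is_derive f x a -> is_derive g x b.
Proof. intros H -> H1. apply (is_derive_ext f g x b H H1). Qed.

Fixpoint SS (n : nat) (f : R -> R) : Prop :=
  match n with O => True | S k => exists f', (forall x, is_derive f x (f' x)) /\ SS k f' end.

Lemma SS_weak : forall n f, SS (S n) f -> SS n f.
Proof.
  induction n; intros f H. exact I.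
  destruct H as [f' [H1 H2]]. exists f'. split; auto.
Qed.

Lemma SS_const : forall n c, SS n (fun _ => c).
Proof.
  induction n; intros c. exact I.
  exists (fun _ => 0). split. intros; apply d_const. apply IHn.
Qed.

Lemma SS_id : forall n, SS n (fun t => t).
Proof.
  destruct n. exact I. exists (fun _ => 1). split. intros; apply d_id. apply SS_const.
Qed.

Lemma SS_plus : forall n f g, SS n f -> SS n g -> SS n (fun t => f t + g t).
Proof.
  induction n; intros f g Hf Hg. exact I.
  destruct Hf as [f' [Hf1 Hf2]]; destruct Hg as [g' [Hg1 Hg2]].
  exists (fun t => f' t + g' t). split. intros; apply d_plus; auto. auto.
Qed.

Lemma SS_mult : forall n f g, SS n f -> SS n g -> SS n (fun t => f t * g t).
Proof.
  induction n; intros f g Hf Hg. exact I.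
  pose proof (SS_weak _ _ Hf) as Wf. pose proof (SS_weak _ _ Hg) as Wg.
  destruct Hf as [f' [Hf1 Hf2]]; destruct Hg as [g' [Hg1 Hg2]].
  exists (fun t => f' t * g t + f t * g' t). split. intros; apply d_mult; auto.
  apply SS_plus; apply IHn; auto.
Qed.

Lemma SS_comp : forall n f g, SS n f -> SS n g -> SS n (fun t => f (g t)).
Proof.
  induction n; intros f g Hf Hg. exact I.
  pose proof (SS_weak _ _ Hg) as Wg.
  destruct Hf as [f' [Hf1 Hf2]]; destruct Hg as [g' [Hg1 Hg2]].
  exists (fun t => g' t * f' (g t)). split. intros; apply d_comp; auto.
  apply SS_mult; auto.
Qed.

Lemma SS_ext : forall n f g, (forall t, f t = g t) -> SS n f -> SS n g.
Proof. intros n f g H. replace g with f. auto. apply functional_extensionality; auto. Qed.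

Definition Sm (f : R -> R) := forall n x, ex_derive (Derive_n f n) x.

Lemma SS_Sm_aux : forall n f, SS (S n) f -> forall x, ex_derive (Derive_n f n) x.
Proof.
  induction n; intros f H x.
  - destruct H as [f' [H1 _]]. simpl. exists (f' x). auto.
  - destruct H as [f' [H1 H2]].
    assert (E : Derive_n f (S n) = Derive_n f' n).
    { apply functional_extensionality. intro y.
      replace (S n) with (n + 1)%nat by (rewrite Nat.add_comm; reflexivity).
      rewrite <- Derive_n_comp. apply Derive_n_ext. intro z. simpl.
      apply is_derive_unique. auto. }
    rewrite E. apply IHn. auto.
Qed.

Lemma SS_Sm f : (forall n, SS n f) -> Sm f.
Proof. intros H n x. apply SS_Sm_aux. apply H. Qed.

Lemma Sm_SS : forall n f, Sm f -> SS n f.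
Proof.
  induction n; intros f H. exact I.
  exists (Derive f). split.
  - intro x. apply Derive_correct. exact (H 0%nat x).
  - apply IHn. intros k x.
    assert (E : Derive_n (Derive f) k = Derive_n f (S k)).
    { apply functional_extensionality. intro y.
      replace (S k) with (k + 1)%nat by (rewrite Nat.add_comm; reflexivity).
      rewrite <- Derive_n_comp. apply Derive_n_ext. intro z. reflexivity. }
    rewrite E. apply H.
Qed.

Lemma SS_PSeries : forall n a, CV_radius a = p_infty -> SS n (PSeries a).
Proof.
  induction n; intros a Ha. exact I.
  exists (PSeries (PS_derive a)). split.
  - intro x. apply is_derive_PSeries. rewrite Ha. exact I.
  - apply IHn. rewrite CV_radius_derive. auto.
Qed.

Lemma CV_sin : CV_radius sin_n = p_infty.
Proof.
  apply CV_radius_infinite_DAlembert. apply sin_no_R0.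
  apply is_lim_seq_Reals. apply Alembert_sin.
Qed.

Definition g (x : R) : R := PSeries sin_n (x ^ 4).

Lemma Sm_g : Sm g.
Proof.
  apply SS_Sm. intro n. unfold g.
  apply (SS_comp n (PSeries sin_n) (fun x => x ^ 4)).
  apply SS_PSeries. apply CV_sin.
  apply (SS_ext n (fun t => t * (t * (t * t)))). intro t; ring.
  repeat apply SS_mult; apply SS_id.
Qed.

Lemma g0 : g 0 = 1.
Proof. unfold g. replace (0 ^ 4) with 0 by ring. rewrite PSeries_0. unfold sin_n. simpl. lra. Qed.

Lemma g_eq x : x <> 0 -> g x = sin (x ^ 2) / x ^ 2.
Proof.
  intro Hx. unfold sin. destruct (exist_sin (Rsqr (x ^ 2))) as [l Hl].
  unfold sin_in in Hl.
  assert (E : g x = l).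
  { unfold g, PSeries. replace (x ^ 4) with (Rsqr (x ^ 2)) by (unfold Rsqr; ring).
    apply is_series_unique. apply is_series_Reals. auto. }
  rewrite E. field. auto.
Qed.

Definition D1 := Derive g.
Definition D2 := Derive D1.
Definition D3 := Derive D2.

Lemma dg x : is_derive g x (D1 x).
Proof. apply Derive_correct. exact (Sm_g 0%nat x). Qed.
Lemma dD1 x : is_derive D1 x (D2 x).
Proof. apply Derive_correct. exact (Sm_g 1%nat x). Qed.
Lemma dD2 x : is_derive D2 x (D3 x).
Proof. apply Derive_correct. exact (Sm_g 2%nat x). Qed.

Lemma isd_cont (f : R -> R) x l : is_derive f x l -> continuity_pt f x.
Proof.
  intro H. apply is_derive_Reals in H.
  apply (derivable_continuous_pt f x (exist _ l H)).
Qed.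

Ltac nzt x H := 
  try (repeat first [split | apply Rmult_integral_contrapositive_currified | apply R1_neq_R0 | exact H]);
  try (replace (x * (x * 1)) with (x ^ 2) by ring; field; exact H).

Definition f0 x := sin (x ^ 2) / x ^ 2.
Definition f1 x := 2 * cos (x ^ 2) / x - 2 * sin (x ^ 2) / x ^ 3.
Definition f2 x := -4 * sin (x ^ 2) - 6 * cos (x ^ 2) / x ^ 2 + 6 * sin (x ^ 2) / x ^ 4.

Lemma df0 x : x <> 0 -> is_derive f0 x (f1 x).
Proof. intro H. unfold f0, f1. auto_derive; nzt x H. Qed.
Lemma df1 x : x <> 0 -> is_derive f1 x (f2 x).
Proof. intro H. unfold f1, f2. auto_derive; nzt x H. Qed.

Lemma loc_nz (P : R -> Prop) x : x <> 0 -> (forall t, t <> 0 -> P t) -> locally x P.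
Proof.
  intros Hx H. assert (Hp : 0 < Rabs x) by (apply Rabs_pos_lt; auto).
  exists (mkposreal _ Hp). intros t Ht. apply H. intro E. subst t.
  unfold ball in Ht; simpl in Ht; unfold AbsRing_ball, abs, minus, plus, opp in Ht; simpl in Ht.
  replace (0 + - x) with (- x) in Ht by ring. rewrite Rabs_Ropp in Ht. lra.
Qed.

Lemma D1_eq x : x <> 0 -> D1 x = f1 x.
Proof.
  intro H. apply is_derive_unique. apply (is_derive_ext_loc f0 g).
  apply loc_nz; auto. intros t Ht. symmetry. apply g_eq; auto.
  apply df0; auto.
Qed.

Lemma D2_eq x : x <> 0 -> D2 x = f2 x.
Proof.
  intro H. apply is_derive_unique. apply (is_derive_ext_loc f1 D1).
  apply loc_nz; auto. intros t Ht. symmetry. apply D1_eq; auto.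
  apply df1; auto.
Qed.

Lemma cont_bound (f : R -> R) K : (forall x, continuity_pt f x) ->
  (forall x, 1 <= Rabs x -> Rabs (f x) <= K) -> exists M, forall x, Rabs (f x) <= M.
Proof.
  intros Hc HK.
  destruct (continuity_ab_maj f (-1) 1) as [a [Ha _]]. lra. intros; auto.
  destruct (continuity_ab_min f (-1) 1) as [b [Hb _]]. lra. intros; auto.
  exists (Rmax K (Rmax (Rabs (f a)) (Rabs (f b)))). intro x.
  destruct (Rle_dec 1 (Rabs x)) as [H|H].
  - eapply Rle_trans. apply HK; auto. apply Rmax_l.
  - assert (Hx : -1 <= x <= 1) by (unfold Rabs in H; destruct (Rcase_abs x); lra).
    specialize (Ha x Hx). specialize (Hb x Hx).
    eapply Rle_trans. 2: apply Rmax_r.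
    unfold Rabs at 1; destruct (Rcase_abs (f x)).
    + eapply Rle_trans. 2: apply Rmax_r. apply Rle_trans with (- f b). lra.
      rewrite <- Rabs_Ropp. apply Rle_abs.
    + eapply Rle_trans. 2: apply Rmax_l. eapply Rle_trans. 2: apply Rle_abs. lra.
Qed.

Lemma frac_le s x k : Rabs s <= 1 -> 1 <= Rabs x -> Rabs (s / x ^ k) <= 1.
Proof.
  intros Hs Hx. assert (Hx0 : x <> 0) by (intro E; subst; rewrite Rabs_R0 in Hx; lra).
  unfold Rdiv. rewrite Rabs_mult, Rabs_inv, <- RPow_abs.
  assert (1 <= Rabs x ^ k) by (apply pow_R1_Rle; auto).
  apply Rle_trans with (1 * / Rabs x ^ k).
  apply Rmult_le_compat_r; auto. left; apply Rinv_0_lt_compat; lra.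
  rewrite Rmult_1_l. rewrite <- Rinv_1. apply Rinv_le_contravar; lra.
Qed.

Lemma Rabs_sin_1 x : Rabs (sin x) <= 1.
Proof. apply Rabs_le. apply SIN_bound. Qed.
Lemma Rabs_cos_1 x : Rabs (cos x) <= 1.
Proof. apply Rabs_le. apply COS_bound. Qed.

Lemma g_bounds : exists M, 0 < M /\ forall x, Rabs (g x) <= M /\ Rabs (D1 x) <= M /\ Rabs (D2 x) <= M.
Proof.
  destruct (cont_bound g 1) as [M0 H0].
  { intro x. eapply isd_cont. apply dg. }
  { intros x Hx. assert (Hx0 : x <> 0) by (intro E; subst; rewrite Rabs_R0 in Hx; lra).
    rewrite g_eq; auto. apply frac_le; auto. apply Rabs_sin_1. }
  destruct (cont_bound D1 4) as [M1 H1].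
  { intro x. eapply isd_cont. apply dD1. }
  { intros x Hx. assert (Hx0 : x <> 0) by (intro E; subst; rewrite Rabs_R0 in Hx; lra).
    rewrite D1_eq; auto.
    replace (f1 x) with (2 * (cos (x^2) / x ^ 1) + - (2 * (sin (x^2) / x ^ 3))) by (unfold f1; field; auto).
    eapply Rle_trans. apply Rabs_triang. rewrite Rabs_Ropp, !Rabs_mult, Rabs_right by lra.
    assert (Rabs (cos (x ^ 2) / x ^ 1) <= 1) by (apply frac_le; auto; apply Rabs_cos_1).
    assert (Rabs (sin (x ^ 2) / x ^ 3) <= 1) by (apply frac_le; auto; apply Rabs_sin_1).
    lra. }
  destruct (cont_bound D2 16) as [M2 H2].
  { intro x. eapply isd_cont. apply dD2. }
  { intros x Hx. assert (Hx0 : x <> 0) by (intro E; subst; rewrite Rabs_R0 in Hx; lra).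
    rewrite D2_eq; auto.
    replace (f2 x) with (- (4 * (sin (x^2) / x ^ 0)) + - (6 * (cos (x^2) / x ^ 2)) + 6 * (sin (x^2) / x ^ 4)) by (unfold f2; field; auto).
    eapply Rle_trans. apply Rabs_triang. eapply Rle_trans. apply Rplus_le_compat_r. apply Rabs_triang.
    rewrite !Rabs_Ropp, !Rabs_mult, !(Rabs_right 4), !(Rabs_right 6) by lra.
    assert (Rabs (sin (x ^ 2) / x ^ 0) <= 1) by (apply frac_le; auto; apply Rabs_sin_1).
    assert (Rabs (cos (x ^ 2) / x ^ 2) <= 1) by (apply frac_le; auto; apply Rabs_cos_1).
    assert (Rabs (sin (x ^ 2) / x ^ 4) <= 1) by (apply frac_le; auto; apply Rabs_sin_1).
    lra. }
  exists (Rmax 1 (Rmax M0 (Rmax M1 M2))). split.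
  apply Rlt_le_trans with 1. lra. apply Rmax_l.
  intro x. specialize (H0 x); specialize (H1 x); specialize (H2 x).
  pose proof (Rmax_l 1 (Rmax M0 (Rmax M1 M2))). pose proof (Rmax_r 1 (Rmax M0 (Rmax M1 M2))).
  pose proof (Rmax_l M0 (Rmax M1 M2)). pose proof (Rmax_r M0 (Rmax M1 M2)).
  pose proof (Rmax_l M1 M2). pose proof (Rmax_r M1 M2). repeat split; lra.
Qed.

Lemma cont_eps (f : R -> R) x : continuity_pt f x -> forall eps, 0 < eps ->
  exists d, 0 < d /\ forall t, Rabs (t - x) < d -> Rabs (f t - f x) < eps.
Proof.
  intros H eps He. destruct (H eps He) as [d [Hd Hx]]. exists d. split; auto.
  intros t Ht. destruct (Req_dec t x) as [E|E].
  - subst. replace (f x - f x) with 0 by ring. rewrite Rabs_R0; auto.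
  - apply (Hx t). split. split. exact I. auto. exact Ht.
Qed.

Lemma cont_g x : continuity_pt g x.
Proof. eapply isd_cont. apply dg. Qed.

Lemma dist_fst p q : Rabs (fst p - fst q) <= dist p q.
Proof.
  unfold dist. rewrite <- sqrt_Rsqr_abs. apply sqrt_le_1_alt.
  unfold Rsqr. pose proof (pow2_ge_0 (snd p - snd q)). simpl. nra.
Qed.
Lemma dist_snd p q : Rabs (snd p - snd q) <= dist p q.
Proof.
  unfold dist. rewrite <- sqrt_Rsqr_abs. apply sqrt_le_1_alt.
  unfold Rsqr. pose proof (pow2_ge_0 (fst p - fst q)). simpl. nra.
Qed.
Lemma dist_le p q : dist p q <= Rabs (fst p - fst q) + Rabs (snd p - snd q).
Proof.
  unfold dist.
  pose proof (Rabs_pos (fst p - fst q)). pose proof (Rabs_pos (snd p - snd q)).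
  rewrite <- (sqrt_pow2 (Rabs (fst p - fst q) + Rabs (snd p - snd q))) by lra.
  apply sqrt_le_1_alt.
  pose proof (pow2_abs (fst p - fst q)). pose proof (pow2_abs (snd p - snd q)). nra.
Qed.
Lemma dist_sym p q : dist p q = dist q p.
Proof. unfold dist. f_equal. ring. Qed.
Lemma dist_pos p q : 0 <= dist p q.
Proof. unfold dist. apply sqrt_pos. Qed.

Lemma dist_vert p h : dist p (fst p, snd p + h) = Rabs h.
Proof.
  unfold dist; simpl. rewrite <- sqrt_Rsqr_abs. f_equal. unfold Rsqr. ring.
Qed.
Lemma dist_horiz p h : dist p (fst p + h, snd p) = Rabs h.
Proof.
  unfold dist; simpl. rewrite <- sqrt_Rsqr_abs. f_equal. unfold Rsqr. ring.
Qed.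

Lemma lt_open (h : R -> R) p : (forall x, continuity_pt h x) -> snd p < h (fst p) ->
  exists e, 0 < e /\ forall q, dist p q < e -> snd q < h (fst q).
Proof.
  intros Hc Hp. set (a := h (fst p) - snd p).
  destruct (cont_eps h (fst p) (Hc _) (a/2)) as [d [Hd Hx]]. unfold a; lra.
  exists (Rmin d (a/2)). split. apply Rmin_pos; unfold a; lra.
  intros q Hq. pose proof (Rmin_l d (a/2)). pose proof (Rmin_r d (a/2)).
  pose proof (dist_fst p q). pose proof (dist_snd p q).
  assert (K1 : Rabs (h (fst q) - h (fst p)) < a/2).
  { apply Hx. rewrite Rabs_minus_sym. lra. }
  apply Rabs_def2 in K1. assert (K2 : Rabs (snd p - snd q) < a/2) by lra.
  apply Rabs_def2 in K2. unfold a in *. lra.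
Qed.

Lemma gt_open (h : R -> R) p : (forall x, continuity_pt h x) -> h (fst p) < snd p ->
  exists e, 0 < e /\ forall q, dist p q < e -> h (fst q) < snd q.
Proof.
  intros Hc Hp. set (a := snd p - h (fst p)).
  destruct (cont_eps h (fst p) (Hc _) (a/2)) as [d [Hd Hx]]. unfold a; lra.
  exists (Rmin d (a/2)). split. apply Rmin_pos; unfold a; lra.
  intros q Hq. pose proof (Rmin_l d (a/2)). pose proof (Rmin_r d (a/2)).
  pose proof (dist_fst p q). pose proof (dist_snd p q).
  assert (K1 : Rabs (h (fst q) - h (fst p)) < a/2).
  { apply Hx. rewrite Rabs_minus_sym. lra. }
  apply Rabs_def2 in K1. assert (K2 : Rabs (snd p - snd q) < a/2) by lra.
  apply Rabs_def2 in K2. unfold a in *. lra.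
Qed.

Lemma Om_iff p : Omega2 p <-> snd p < g (fst p).
Proof.
  destruct p as [x y]; unfold Omega2; simpl.
  destruct (Req_dec x 0) as [E|E].
  - subst. rewrite g0. split. intros [[H _]|[_ H]]; auto. lra. intro; right; auto.
  - rewrite g_eq; auto. split. intros [[_ H]|[H _]]; auto. lra. intro; left; auto.
Qed.

Lemma bd_iff p : boundary Omega2 p <-> snd p = g (fst p).
Proof.
  split.
  - intro H. destruct (Rtotal_order (snd p) (g (fst p))) as [L|[Eq|L]]; auto; exfalso.
    + destruct (lt_open g p cont_g L) as [e [He Hq]].
      destruct (H e He) as [_ [q [Hq1 Hq2]]]. apply Hq1. apply Om_iff. auto.
    + destruct (gt_open g p cont_g L) as [e [He Hq]].
      destruct (H e He) as [[q [Hq1 Hq2]] _]. apply Om_iff in Hq1. specialize (Hq q Hq2). lra.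
  - intros Hp e He. split.
    + exists (fst p, snd p - e/2). split. apply Om_iff; simpl; lra.
      replace (snd p - e/2) with (snd p + - (e/2)) by ring. rewrite dist_vert.
      rewrite Rabs_Ropp, Rabs_right; lra.
    + exists p. split. rewrite Om_iff. lra.
      unfold dist. replace ((fst p - fst p) ^ 2 + (snd p - snd p) ^ 2) with 0 by ring. rewrite sqrt_0; auto.
Qed.

Definition gam (P Q : pt) (t : R) : pt :=
  (fst P + t * (fst Q - fst P), snd P + t * (snd Q - snd P)).

Lemma gam_dist P Q u v : dist (gam P Q u) (gam P Q v) <= Rabs (u - v) * (Rabs (fst Q - fst P) + Rabs (snd Q - snd P) + 1).
Proof.
  eapply Rle_trans. apply dist_le. unfold gam; simpl.
  replace (fst P + u * (fst Q - fst P) - (fst P + v * (fst Q - fst P))) with ((u - v) * (fst Q - fst P)) by ring.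
  replace (snd P + u * (snd Q - snd P) - (snd P + v * (snd Q - snd P))) with ((u - v) * (snd Q - snd P)) by ring.
  rewrite !Rabs_mult. pose proof (Rabs_pos (u - v)). nra.
Qed.

Lemma seg_conn (S A B : pt -> Prop) P Q : open_set A -> open_set B ->
  (forall p, S p -> A p \/ B p) -> (forall p, S p -> A p -> B p -> False) ->
  (forall t, 0 <= t <= 1 -> S (gam P Q t)) -> A P -> A Q.
Proof.
  intros HA HB Hcov Hdis HS HP.
  set (L := Rabs (fst Q - fst P) + Rabs (snd Q - snd P) + 1).
  assert (HL : 0 < L) by (unfold L; pose proof (Rabs_pos (fst Q - fst P)); pose proof (Rabs_pos (snd Q - snd P)); lra).
  assert (G0 : gam P Q 0 = P) by (unfold gam; destruct P; simpl; f_equal; ring).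
  assert (G1 : gam P Q 1 = Q) by (unfold gam; destruct P, Q; simpl; f_equal; ring).
  set (E := fun t => 0 <= t <= 1 /\ forall u, 0 <= u <= t -> A (gam P Q u)).
  assert (Hb : bound E) by (exists 1; intros t [Ht _]; lra).
  assert (He : exists x, E x).
  { exists 0. split. lra. intros u Hu. replace u with 0 by lra. rewrite G0; auto. }
  destruct (completeness E Hb He) as [s [Hub Hlub]].
  assert (Hs0 : 0 <= s) by (apply Hub; destruct He as [x Hx]; unfold E; split; [lra|]; intros u Hu; replace u with 0 by lra; rewrite G0; auto).
  assert (Hs1 : s <= 1) by (apply Hlub; intros t [Ht _]; lra).
  assert (Hbelow : forall u, 0 <= u < s -> A (gam P Q u)).
  { intros u Hu. destruct (classic (exists t, E t /\ u < t)) as [[t [[Ht1 Ht2] Hut]]|N].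
    - apply Ht2. lra.
    - exfalso. assert (s <= u). apply Hlub. intros t Ht. apply Rnot_lt_le. intro. apply N. exists t; auto. lra. }
  assert (Hss : S (gam P Q s)) by (apply HS; lra).
  destruct (Hcov _ Hss) as [As|Bs].
  - destruct (HA _ As) as [e [He0 Hball]].
    destruct (Rle_lt_or_eq_dec s 1 Hs1) as [Hlt|Heq].
    + exfalso. set (m := Rmin (1 - s) (e / (2 * L))).
      assert (Hm : 0 < m) by (apply Rmin_pos; [lra | apply Rdiv_lt_0_compat; lra]).
      assert (Hm1 : m <= 1 - s) by apply Rmin_l. assert (Hm2 : m <= e / (2 * L)) by apply Rmin_r.
      assert (E (s + m / 2)).
      { split. lra. intros u Hu. destruct (Rlt_le_dec u s). apply Hbelow; lra.
        apply Hball. eapply Rle_lt_trans. apply gam_dist. fold L.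
        rewrite Rabs_minus_sym, Rabs_right by lra.
        apply Rle_lt_trans with (m/2 * L). apply Rmult_le_compat_r; lra.
        apply Rle_lt_trans with (e / (2 * L) / 2 * L). apply Rmult_le_compat_r; lra.
        replace (e / (2 * L) / 2 * L) with (e / 4) by (field; lra). lra. }
      apply Hub in H. lra.
    + rewrite <- G1, <- Heq. auto.
  - exfalso. destruct (HB _ Bs) as [e [He0 Hball]].
    destruct (Rle_lt_or_eq_dec 0 s Hs0) as [Hlt|Heq].
    + set (m := Rmin s (e / (2 * L))).
      assert (Hm : 0 < m) by (apply Rmin_pos; [lra | apply Rdiv_lt_0_compat; lra]).
      assert (Hm1 : m <= s) by apply Rmin_l. assert (Hm2 : m <= e / (2 * L)) by apply Rmin_r.
      apply (Hdis (gam P Q (s - m/2))). apply HS; lra. apply Hbelow; lra.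
      apply Hball. eapply Rle_lt_trans. apply gam_dist. fold L.
      replace (s - (s - m/2)) with (m/2) by ring. rewrite Rabs_right by lra.
      apply Rle_lt_trans with (e / (2 * L) / 2 * L). apply Rmult_le_compat_r; lra.
      replace (e / (2 * L) / 2 * L) with (e / 4) by (field; lra). lra.
    + apply (Hdis P). rewrite <- G0. apply HS; lra. auto. rewrite <- G0, Heq. auto.
Qed.

Lemma g_lower : exists m, forall x, m < g x.
Proof.
  destruct g_bounds as [M [HM H]]. exists (-(M+1)). intro x. destruct (H x) as [H0 _].
  pose proof (Rle_abs (- g x)). rewrite Rabs_Ropp in *. lra.
Qed.

Lemma vert_seg (h : R -> R) x a b t : a < h x -> b < h x -> 0 <= t <= 1 -> a + t * (b - a) < h (x + t * (x - x)).
Proof.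
  intros Ha Hb Ht. replace (x + t * (x - x)) with x by ring.
  assert (0 <= t * (h x - b)) by (apply Rmult_le_pos; lra).
  assert (0 <= (1 - t) * (h x - a)) by (apply Rmult_le_pos; lra).
  destruct (Req_dec t 1). subst. lra. 
  assert (0 < (1 - t) * (h x - a)) by (apply Rmult_lt_0_compat; lra). nra.
Qed.

Lemma dom_Om : domain Omega2.
Proof.
  split; [|split].
  - intros p Hp. apply Om_iff in Hp. destruct (lt_open g p cont_g Hp) as [e [He H]].
    exists e. split; auto. intros q Hq. apply Om_iff. auto.
  - intros A B HA HB Hcov Hdis.
    destruct (classic (exists p, Omega2 p /\ A p)) as [[p [Sp Ap]]|N].
    + right. intros q Sq Bq. apply (Hdis q Sq); auto.
      destruct g_lower as [m Hm].
      assert (A1 : A (fst p, m)).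
      { apply (seg_conn Omega2 A B p (fst p, m)); auto. intros t Ht. apply Om_iff.
        unfold gam; simpl. apply vert_seg; auto. apply Om_iff; auto. }
      assert (A2 : A (fst q, m)).
      { apply (seg_conn Omega2 A B (fst p, m) (fst q, m)); auto. intros t Ht. apply Om_iff.
        unfold gam; simpl. replace (m + t * (m - m)) with m by ring. auto. }
      assert (Eq : q = (fst q, snd q)) by (destruct q; auto). rewrite Eq.
      apply (seg_conn Omega2 A B (fst q, m) (fst q, snd q)); auto. intros t Ht. apply Om_iff.
      unfold gam; simpl. apply vert_seg; auto. apply Om_iff in Sq; auto.
    + left. intros p Sp Ap. apply N; eauto.
  - exists (0, 0). apply Om_iff. simpl. rewrite g0. lra.
Qed.

Lemma Sm_Derive F : Sm F -> Sm (Derive F).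
Proof.
  intros H k x.
  assert (E : Derive_n (Derive F) k = Derive_n F (S k)).
  { apply functional_extensionality. intro y.
    replace (S k) with (k + 1)%nat by (rewrite Nat.add_comm; reflexivity).
    rewrite <- Derive_n_comp. apply Derive_n_ext. intro z. reflexivity. }
  rewrite E. apply H.
Qed.

Lemma Sm_const c : Sm (fun _ => c).
Proof. apply SS_Sm. intro n. apply SS_const. Qed.

Lemma Sm_cont F x : Sm F -> continuity_pt F x.
Proof. intro H. destruct (H 0%nat x) as [l Hl]. eapply isd_cont. exact Hl. Qed.

Lemma lin_cont (U : pt -> Prop) c k e F : (forall x, continuity_pt F x) ->
  continuous_on U (fun p => c * snd p + k * F (fst p) + e).
Proof.
  intros HF p _ eps Heps.
  destruct (cont_eps F (fst p) (HF _) (eps / (2 * (Rabs k + 1)))) as [d [Hd Hx]].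
  { apply Rdiv_lt_0_compat. lra. pose proof (Rabs_pos k); lra. }
  exists (Rmin d (eps / (2 * (Rabs c + 1)))). split.
  { apply Rmin_pos; auto. apply Rdiv_lt_0_compat. lra. pose proof (Rabs_pos c); lra. }
  intros q _ Hq. pose proof (Rmin_l d (eps / (2 * (Rabs c + 1)))). pose proof (Rmin_r d (eps / (2 * (Rabs c + 1)))).
  pose proof (dist_fst p q). pose proof (dist_snd p q).
  assert (K1 : Rabs (F (fst q) - F (fst p)) < eps / (2 * (Rabs k + 1))).
  { apply Hx. rewrite Rabs_minus_sym. lra. }
  assert (K2 : Rabs (snd q - snd p) < eps / (2 * (Rabs c + 1))).
  { rewrite Rabs_minus_sym. lra. }
  replace (c * snd q + k * F (fst q) + e - (c * snd p + k * F (fst p) + e)) with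
    (c * (snd q - snd p) + k * (F (fst q) - F (fst p))) by ring.
  eapply Rle_lt_trans. apply Rabs_triang. rewrite !Rabs_mult.
  pose proof (Rabs_pos c). pose proof (Rabs_pos k).
  pose proof (Rabs_pos (snd q - snd p)). pose proof (Rabs_pos (F (fst q) - F (fst p))).
  assert (Rabs c * Rabs (snd q - snd p) <= eps / 2).
  { apply Rle_trans with ((Rabs c + 1) * (eps / (2 * (Rabs c + 1)))).
    apply Rmult_le_compat; lra. right. field. lra. }
  assert (Rabs k * Rabs (F (fst q) - F (fst p)) < eps / 2).
  { apply Rle_lt_trans with ((Rabs k) * (eps / (2 * (Rabs k + 1)))).
    apply Rmult_le_compat_l; lra.
    apply Rlt_le_trans with ((Rabs k + 1) * (eps / (2 * (Rabs k + 1)))).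
    apply Rmult_lt_compat_r. apply Rdiv_lt_0_compat; lra. lra. right. field. lra. }
  lra.
Qed.

Lemma LinCm : forall m b (U : pt -> Prop) c k e F, Sm F ->
  (b = true -> exists B, forall p, U p -> Rabs (snd p) <= B) ->
  (b = true -> forall j, (j <= m)%nat -> exists K, forall x, Rabs (Derive_n F j x) <= K) ->
  CmB b m U (fun p => c * snd p + k * F (fst p) + e).
Proof.
  induction m; intros b U c k e F HF HU HK.
  - split. apply lin_cont. intro; apply Sm_cont; auto. split; [|exact I].
    intro Hb. destruct (HU Hb) as [B HB]. destruct (HK Hb 0%nat (le_n _)) as [K HKK].
    exists (Rabs c * B + Rabs k * K + Rabs e). intros p Hp.
    specialize (HB p Hp). specialize (HKK (fst p)). simpl in HKK.
    eapply Rle_trans. apply Rabs_triang. eapply Rle_trans. apply Rplus_le_compat_r. apply Rabs_triang.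
    rewrite !Rabs_mult. pose proof (Rabs_pos c). pose proof (Rabs_pos k).
    apply Rplus_le_compat_r. apply Rplus_le_compat; apply Rmult_le_compat_l; auto.
  - split. apply lin_cont. intro; apply Sm_cont; auto. split.
    + intro Hb. destruct (HU Hb) as [B HB]. destruct (HK Hb 0%nat ltac:(lia)) as [K HKK].
      exists (Rabs c * B + Rabs k * K + Rabs e). intros p Hp.
      specialize (HB p Hp). specialize (HKK (fst p)). simpl in HKK.
      eapply Rle_trans. apply Rabs_triang. eapply Rle_trans. apply Rplus_le_compat_r. apply Rabs_triang.
      rewrite !Rabs_mult. pose proof (Rabs_pos c). pose proof (Rabs_pos k).
      apply Rplus_le_compat_r. apply Rplus_le_compat; apply Rmult_le_compat_l; auto.
    + exists (fun p => 0 * snd p + k * Derive F (fst p) + 0).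
      exists (fun p => 0 * snd p + 0 * F (fst p) + c).
      split; [|split].
      * intros p Hp. split.
        -- unfold partial_x. apply is_derive_Reals. simpl.
           eapply d_ext. 3: { apply d_plus. apply d_plus. apply d_const.
              apply (is_derive_scal F (fst p) k). apply Derive_correct. exact (HF 0%nat (fst p)).
              apply d_const. }
           all: try (intro; reflexivity); try ring.
        -- unfold partial_y. apply is_derive_Reals. simpl.
           eapply d_ext. 3: { apply d_plus. apply d_plus.
              apply (is_derive_scal (fun t => t) (snd p) c). apply d_id.
              apply d_const. apply d_const. }
           all: try (intro; reflexivity); try ring.
      * apply IHm. apply Sm_Derive; auto. auto.
        intros Hb j Hj. destruct (HK Hb (S j) ltac:(lia)) as [K HKK]. exists K. intro x.
        assert (E : Derive_n (Derive F) j x = Derive_n F (S j) x).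
        { replace (S j) with (j + 1)%nat by lia. rewrite <- Derive_n_comp. apply Derive_n_ext. intro z. reflexivity. }
        rewrite E. auto.
      * apply IHm; auto; intros Hb j Hj; apply HK; auto.
Qed.

Definition rho0 (p : pt) : R := 1 * snd p + (-1) * g (fst p) + 0.

Lemma deriv_uniq (f : R -> R) x a b : derivable_pt_lim f x a -> derivable_pt_lim f x b -> a = b.
Proof.
  intros Ha Hb. apply is_derive_Reals in Ha. apply is_derive_Reals in Hb.
  apply is_derive_unique in Ha. apply is_derive_unique in Hb. congruence.
Qed.

Lemma rho0_py p gy : partial_y rho0 p gy -> gy = 1.
Proof.
  intro H. unfold partial_y, rho0 in H. simpl in H.
  eapply deriv_uniq. exact H. apply is_derive_Reals.
  eapply d_ext. 3: { apply d_plus. apply d_plus.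
     apply (is_derive_scal (fun t => t) (snd p) 1). apply d_id. apply d_const. apply d_const. }
  intro; reflexivity. ring.
Qed.

Lemma rho0_px p : partial_x rho0 p (- D1 (fst p)).
Proof.
  unfold partial_x, rho0. simpl. apply is_derive_Reals.
  eapply d_ext. 3: { apply d_plus. apply d_plus. apply d_const.
     apply (is_derive_scal g (fst p) (-1)). apply dg. apply d_const. }
  intro; reflexivity. ring.
Qed.

Lemma rho0_neg p : rho0 p < 0 <-> Omega2 p.
Proof. rewrite Om_iff. unfold rho0. split; intro; lra. Qed.

Lemma rho0_grad p : boundary Omega2 p -> exists gx gy,
  partial_x rho0 p gx /\ partial_y rho0 p gy /\ (gx <> 0 \/ gy <> 0).
Proof.
  intros _. exists (- D1 (fst p)), 1. split. apply rho0_px. split. 2: right; lra.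
  unfold partial_y, rho0. simpl. apply is_derive_Reals.
  eapply d_ext. 3: { apply d_plus. apply d_plus.
     apply (is_derive_scal (fun t => t) (snd p) 1). apply d_id. apply d_const. apply d_const. }
  intro; reflexivity. ring.
Qed.

Lemma part_Cinf : exists U rho, defining_fun Cinf Omega2 U rho.
Proof.
  exists (fun _ => True), rho0. split; [|split; [|split; [|split]]].
  - intros p _. exists 1. split. lra. auto.
  - auto.
  - intro m. unfold Cm, rho0. apply LinCm. apply Sm_g. discriminate. discriminate.
  - intros p _. apply rho0_neg.
  - apply rho0_grad.
Qed.

Lemma Lip (f f' : R -> R) K : (forall x, is_derive f x (f' x)) -> (forall x, Rabs (f' x) <= K) ->
  forall a b, Rabs (f a - f b) <= K * Rabs (a - b).
Proof.
  intros Hd HK a b. destruct (MVT_gen f b a f') as [c [_ Hc]].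
  intros; auto. intros; eapply isd_cont; eauto.
  rewrite Hc, Rabs_mult. apply Rmult_le_compat_r. apply Rabs_pos. auto.
Qed.

Lemma cont_gc c x : continuity_pt (fun t => g t + c) x.
Proof. eapply isd_cont. apply d_plus. apply dg. apply d_const. Qed.

Definition Ustrip (p : pt) : Prop := Rabs (snd p - g (fst p)) < 1.

Lemma Ustrip_open : open_set Ustrip.
Proof.
  intros p Hp. unfold Ustrip in Hp. apply Rabs_def2 in Hp.
  destruct (lt_open (fun t => g t + 1) p (cont_gc 1)) as [e1 [He1 H1]]. lra.
  destruct (gt_open (fun t => g t + -1) p (cont_gc (-1))) as [e2 [He2 H2]]. lra.
  exists (Rmin e1 e2). split. apply Rmin_pos; auto. intros q Hq.
  pose proof (Rmin_l e1 e2). pose proof (Rmin_r e1 e2).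
  specialize (H1 q ltac:(lra)). specialize (H2 q ltac:(lra)).
  unfold Ustrip. apply Rabs_def1; lra.
Qed.

Lemma Ustrip_bd q : boundary Ustrip q -> Rabs (snd q - g (fst q)) = 1.
Proof.
  intro H. destruct (Rtotal_order (Rabs (snd q - g (fst q))) 1) as [L|[E|L]]; auto; exfalso.
  - destruct (Ustrip_open q L) as [e [He Hq]].
    destruct (H e He) as [_ [r [Hr1 Hr2]]]. apply Hr1. auto.
  - unfold Rabs in L. destruct (Rcase_abs (snd q - g (fst q))).
    + destruct (lt_open (fun t => g t + -1) q (cont_gc (-1))) as [e [He Hq]]. lra.
      destruct (H e He) as [[r0 [Hr1 Hr2]] _]. specialize (Hq r0 Hr2).
      unfold Ustrip in Hr1. apply Rabs_def2 in Hr1. lra.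
    + destruct (gt_open (fun t => g t + 1) q (cont_gc 1)) as [e [He Hq]]. lra.
      destruct (H e He) as [[r0 [Hr1 Hr2]] _]. specialize (Hq r0 Hr2).
      unfold Ustrip in Hr1. apply Rabs_def2 in Hr1. lra.
Qed.

Lemma part_C2 : exists U rho, uniform_defining_fun 2 Omega2 U rho.
Proof.
  destruct g_bounds as [M [HM Hb]].
  assert (HK : true = true -> forall j, (j <= 2)%nat -> exists K, forall x, Rabs (Derive_n g j x) <= K).
  { intros _ j Hj. exists M. intro x. destruct (Hb x) as [B0 [B1 B2]].
    destruct j as [|[|[|j]]]; simpl; auto. lia. }
  assert (HU : true = true -> exists B, forall p, Ustrip p -> Rabs (snd p) <= B).
  { intros _. exists (M + 1). intros p Hp. unfold Ustrip in Hp. destruct (Hb (fst p)) as [B0 _].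
    replace (snd p) with ((snd p - g (fst p)) + g (fst p)) by ring.
    eapply Rle_trans. apply Rabs_triang. lra. }
  assert (Hlip : forall a b, Rabs (g a - g b) <= M * Rabs (a - b)).
  { apply (Lip g D1). apply dg. intro x; apply Hb. }
  exists Ustrip, rho0. split; [|split; [|split]].
  - split; [|split; [|split; [|split]]].
    + apply Ustrip_open.
    + intros p Hp. apply bd_iff in Hp. unfold Ustrip. rewrite Hp.
      replace (g (fst p) - g (fst p)) with 0 by ring. rewrite Rabs_R0. lra.
    + unfold Cm, rho0. apply LinCm. apply Sm_g. discriminate. discriminate.
    + intros p _. apply rho0_neg.
    + apply rho0_grad.
  - exists (1 / (M + 1)). split. apply Rdiv_lt_0_compat; lra.
    intros p q Hp Hq. apply bd_iff in Hp. apply Ustrip_bd in Hq.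
    pose proof (dist_fst p q). pose proof (dist_snd p q). pose proof (Hlip (fst q) (fst p)).
    rewrite Rabs_minus_sym in H. 
    assert (1 <= dist p q + M * dist p q).
    { rewrite <- Hq. replace (snd q - g (fst q)) with ((snd q - snd p) + (g (fst p) - g (fst q))) by (rewrite Hp; ring).
      eapply Rle_trans. apply Rabs_triang. rewrite Rabs_minus_sym. rewrite (Rabs_minus_sym (g (fst p))).
      apply Rplus_le_compat. lra. eapply Rle_trans. exact H1. apply Rmult_le_compat_l; lra. }
    apply (Rmult_le_reg_r (M + 1)). lra. replace (1 / (M + 1) * (M + 1)) with 1 by (field; lra). lra.
  - unfold rho0. apply LinCm. apply Sm_g. auto. auto.
  - exists 1. split. lra. intros p gx gy _ Hx Hy. apply rho0_py in Hy. subst gy.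
    rewrite <- sqrt_1 at 1. apply sqrt_le_1_alt. pose proof (pow2_ge_0 gx). replace (1 ^ 2) with 1 by ring. lra.
Qed.

Lemma min_deriv0 (f : R -> R) c l : is_derive f c l -> (forall t, f c <= f t) -> l = 0.
Proof.
  intros H Hm. apply is_derive_Reals in H.
  pose proof (deriv_minimum f (c - 1) (c + 1) c (exist _ l H)) as K.
  simpl in K. apply K; try lra. intros; auto.
Qed.

Lemma sq_lt_abs a r : 0 < r -> a ^ 2 < r ^ 2 -> Rabs a < r.
Proof.
  intros Hr H. unfold Rabs; destruct (Rcase_abs a); nra.
Qed.

Section Reach.
Variable M : R.
Hypothesis HM : 0 < M.
Hypothesis Hb : forall x, Rabs (g x) <= M /\ Rabs (D1 x) <= M /\ Rabs (D2 x) <= M.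
Variables x1 x2 : R.

Definition phi t := (x1 - t) ^ 2 + (x2 - g t) ^ 2.
Definition psi t := - 2 * (x1 - t) - 2 * (x2 - g t) * D1 t.
Definition psi' t := 2 + 2 * D1 t * D1 t - 2 * (x2 - g t) * D2 t.

Lemma dphi t : is_derive phi t (psi t).
Proof.
  unfold phi, psi. auto_derive. exists (D1 t). apply dg. change (Derive (fun x : R => g x) t) with (D1 t). ring.
Qed.
Lemma dpsi t : is_derive psi t (psi' t).
Proof.
  unfold psi, psi'. auto_derive. split. exists (D1 t). apply dg. split; auto. exists (D2 t). apply dD1.
  change (Derive (fun x : R => g x) t) with (D1 t). change (Derive (fun x : R => D1 x) t) with (D2 t). ring.
Qed.

Definition rr := 1 / (2 * (2 * M + 1) * M).
Lemma rr_pos : 0 < rr.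
Proof. unfold rr. apply Rdiv_lt_0_compat. lra. nra. Qed.

Lemma uniq_lt t1 t2 : t1 < t2 -> (forall c, phi t1 <= phi c) -> (forall c, phi t2 <= phi c) ->
  phi t1 < rr ^ 2 -> False.
Proof.
  intros Hlt H1 H2 Hr.
  assert (Z1 : psi t1 = 0) by (apply (min_deriv0 phi t1); auto; apply dphi).
  assert (Z2 : psi t2 = 0) by (apply (min_deriv0 phi t2); auto; apply dphi).
  assert (E12 : phi t2 = phi t1) by (apply Rle_antisym; auto).
  pose proof rr_pos as Hrr.
  assert (A1 : Rabs (x1 - t1) < rr) by (apply sq_lt_abs; auto; unfold phi in Hr; pose proof (pow2_ge_0 (x2 - g t1)); lra).
  assert (A2 : Rabs (x1 - t2) < rr) by (apply sq_lt_abs; auto; unfold phi in Hr, E12; pose proof (pow2_ge_0 (x2 - g t2)); lra).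
  assert (B1 : Rabs (x2 - g t1) < rr) by (apply sq_lt_abs; auto; unfold phi in Hr; pose proof (pow2_ge_0 (x1 - t1)); lra).
  destruct (MVT_gen psi t1 t2 psi') as [c [Hc Hmvt]].
  { intros; apply dpsi. } { intros; eapply isd_cont; apply dpsi. }
  rewrite Rmin_left in Hc by lra. rewrite Rmax_right in Hc by lra.
  rewrite Z1, Z2 in Hmvt.
  assert (Hpc : 1 <= psi' c).
  { unfold psi'. destruct (Hb c) as [_ [_ HD2]].
    assert (L : Rabs (g t1 - g c) <= M * Rabs (t1 - c)) by (apply (Lip g D1); [apply dg | intro; apply Hb]).
    assert (Tc : Rabs (t1 - c) <= 2 * rr).
    { apply Rabs_def2 in A1. apply Rabs_def2 in A2. rewrite Rabs_left1 by lra. lra. }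
    assert (G : Rabs (x2 - g c) <= rr * (2 * M + 1)).
    { replace (x2 - g c) with ((x2 - g t1) + (g t1 - g c)) by ring.
      eapply Rle_trans. apply Rabs_triang. 
      assert (M * Rabs (t1 - c) <= M * (2 * rr)) by (apply Rmult_le_compat_l; lra). lra. }
    assert (P : (x2 - g c) * D2 c <= rr * (2 * M + 1) * M).
    { eapply Rle_trans. apply Rle_abs. rewrite Rabs_mult.
      apply Rmult_le_compat; auto; apply Rabs_pos. }
    assert (Q : rr * (2 * M + 1) * M = 1 / 2) by (unfold rr; field; lra).
    assert (0 <= D1 c * D1 c) by nra. lra. }
  nra.
Qed.

End Reach.

Lemma dist_graph x t : dist x (t, g t) = sqrt (phi (fst x) (snd x) t).
Proof. reflexivity. Qed.

Lemma part_reach : positive_reach (boundary Omega2).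
Proof.
  destruct g_bounds as [M [HM Hb]].
  exists (rr M). split. apply rr_pos; auto.
  intros y Hy x Hyx. apply bd_iff in Hy.
  set (r := rr M). pose proof (rr_pos M HM) as Hr. fold r in Hr.
  set (ph := phi (fst x) (snd x)).
  assert (Hcont : forall c, continuity_pt ph c) by (intro; eapply isd_cont; apply dphi).
  destruct (continuity_ab_min ph (fst x - r) (fst x + r)) as [ts [Hts Htsr]]. lra. intros; auto.
  assert (Ey : dist x y = sqrt (ph (fst y))).
  { unfold ph. rewrite <- dist_graph. destruct y as [y1 y2]. simpl in Hy |- *. rewrite <- Hy. reflexivity. }
  assert (Dy : ph (fst y) < r ^ 2).
  { rewrite dist_sym in Hyx. rewrite Ey in Hyx. fold r in Hyx. rewrite <- (sqrt_pow2 r) in Hyx by lra.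
    apply sqrt_lt_0_alt in Hyx. auto. }
  assert (Yin : fst x - r <= fst y <= fst x + r).
  { assert (Rabs (fst x - fst y) < r).
    { apply sq_lt_abs; auto. unfold ph, phi in Dy. pose proof (pow2_ge_0 (snd x - g (fst y))). lra. }
    apply Rabs_def2 in H. lra. }
  assert (Hglob : forall c, ph ts <= ph c).
  { intro c. destruct (Rle_dec (fst x - r) c) as [H1|H1]; [destruct (Rle_dec c (fst x + r)) as [H2|H2]|].
    - apply Hts; lra.
    - apply Rle_trans with (ph (fst y)). apply Hts; auto.
      unfold ph, phi. pose proof (pow2_ge_0 (snd x - g c)). unfold ph, phi in Dy.
      assert (r ^ 2 <= (fst x - c) ^ 2) by nra. lra.
    - apply Rle_trans with (ph (fst y)). apply Hts; auto.
      unfold ph, phi. pose proof (pow2_ge_0 (snd x - g c)). unfold ph, phi in Dy.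
      assert (r ^ 2 <= (fst x - c) ^ 2) by nra. lra. }
  assert (Hsm : ph ts < r ^ 2) by (apply Rle_lt_trans with (ph (fst y)); auto).
  assert (Char : forall z, boundary Omega2 z -> dist x z = sqrt (ph (fst z))).
  { intros z Hz. apply bd_iff in Hz. unfold ph. rewrite <- dist_graph. destruct z as [z1 z2]. simpl in Hz |- *. rewrite <- Hz. reflexivity. }
  exists (ts, g ts). split.
  - split. apply bd_iff. reflexivity.
    intros z Hz. rewrite dist_graph, Char by auto. apply sqrt_le_1_alt. apply Hglob.
  - intros z [Hz Hmin]. 
    assert (Hz' : forall c, ph (fst z) <= ph c).
    { intro c. specialize (Hmin (c, g c) ltac:(apply bd_iff; reflexivity)).
      rewrite Char in Hmin by auto. rewrite dist_graph in Hmin.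
      apply sqrt_le_0 in Hmin; auto; unfold ph, phi; pose proof (pow2_ge_0 (snd x - g c)); pose proof (pow2_ge_0 (fst x - c));
        pose proof (pow2_ge_0 (snd x - g (fst z))); pose proof (pow2_ge_0 (fst x - fst z)); lra. }
    assert (Eq : ts = fst z).
    { destruct (Rtotal_order ts (fst z)) as [L|[E|L]]; auto; exfalso.
      - apply (uniq_lt M HM Hb (fst x) (snd x) ts (fst z)); auto.
      - apply (uniq_lt M HM Hb (fst x) (snd x) (fst z) ts); auto.
        apply Rle_lt_trans with (ph ts); auto. }
    apply bd_iff in Hz. destruct z as [z1 z2]. simpl in *. subst. reflexivity.
Qed.

Lemma diff2 (U : pt -> Prop) (F Fx Fy : pt -> R) x y : open_set U ->
  (forall p, U p -> partial_x F p (Fx p) /\ partial_y F p (Fy p)) ->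
  continuous_on U Fx -> U (x, y) ->
  differentiable_pt_lim (fun u v => F (u, v)) x y (Fx (x, y)) (Fy (x, y)).
Proof.
  intros HU Hp HFx Hxy eps.
  destruct (HU _ Hxy) as [e0 [He0 Hball]].
  destruct (HFx (x, y) Hxy (eps / 2)) as [d1 [Hd1 H1]]. destruct eps; simpl; lra.
  destruct (Hp _ Hxy) as [_ Py]. unfold partial_y in Py; simpl in Py.
  destruct (Py (eps / 2)) as [d2 H2]. destruct eps; simpl; lra.
  set (d := Rmin (Rmin (e0 / 2) (d1 / 2)) d2).
  assert (Hd : 0 < d). { unfold d. apply Rmin_pos. apply Rmin_pos; lra. apply cond_pos. }
  exists (mkposreal d Hd). simpl. intros u v Hu Hv.
  assert (Hd0 : d <= e0 / 2) by (unfold d; eapply Rle_trans; [apply Rmin_l | apply Rmin_l]).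
  assert (Hd1' : d <= d1 / 2) by (unfold d; eapply Rle_trans; [apply Rmin_l | apply Rmin_r]).
  assert (Hd2 : d <= d2) by (unfold d; apply Rmin_r).
  assert (Hin : forall s, Rabs (s - x) <= Rabs (u - x) -> U (s, v) /\ dist (x, y) (s, v) < d1).
  { intros s Hs. assert (dist (x, y) (s, v) < 2 * d).
    { eapply Rle_lt_trans. apply dist_le. simpl. rewrite (Rabs_minus_sym x), (Rabs_minus_sym y). lra. }
    split. apply Hball. lra. lra. }
  assert (P1 : Rabs (F (u, v) - F (x, v) - Fx (x, y) * (u - x)) <= eps / 2 * Rabs (u - x)).
  { destruct (MVT_gen (fun s => F (s, v)) x u (fun s => Fx (s, v))) as [c [Hc Hm]].
    - intros s Hs. apply is_derive_Reals.
      assert (Hs' : Rabs (s - x) <= Rabs (u - x)).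
      { unfold Rmin, Rmax in Hs; destruct (Rle_dec x u); unfold Rabs; destruct (Rcase_abs (s - x)); destruct (Rcase_abs (u - x)); lra. }
      destruct (Hin s Hs') as [Hs1 _]. destruct (Hp _ Hs1) as [Px _]. exact Px.
    - intros s Hs.
      assert (Hs' : Rabs (s - x) <= Rabs (u - x)).
      { unfold Rmin, Rmax in Hs; destruct (Rle_dec x u); unfold Rabs; destruct (Rcase_abs (s - x)); destruct (Rcase_abs (u - x)); lra. }
      destruct (Hin s Hs') as [Hs1 _]. destruct (Hp _ Hs1) as [Px _].
      eapply isd_cont. apply is_derive_Reals. exact Px.
    - assert (Hc' : Rabs (c - x) <= Rabs (u - x)).
      { unfold Rmin, Rmax in Hc; destruct (Rle_dec x u); unfold Rabs; destruct (Rcase_abs (c - x)); destruct (Rcase_abs (u - x)); lra. }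
      destruct (Hin c Hc') as [Hc1 Hc2].
      specialize (H1 (c, v) Hc1 Hc2).
      replace (F (u, v) - F (x, v) - Fx (x, y) * (u - x)) with ((Fx (c, v) - Fx (x, y)) * (u - x)) by lra.
      rewrite Rabs_mult. apply Rmult_le_compat_r. apply Rabs_pos. lra. }
  assert (P2 : Rabs (F (x, v) - F (x, y) - Fy (x, y) * (v - y)) <= eps / 2 * Rabs (v - y)).
  { destruct (Req_dec v y) as [E|E].
    - subst. replace (F (x, y) - F (x, y) - Fy (x, y) * (y - y)) with 0 by ring.
      rewrite Rabs_R0. replace (y - y) with 0 by ring. rewrite Rabs_R0. lra.
    - specialize (H2 (v - y) ltac:(lra) ltac:(lra)). replace (y + (v - y)) with v in H2 by ring.
      replace (F (x, v) - F (x, y) - Fy (x, y) * (v - y)) with (((F (x, v) - F (x, y)) / (v - y) - Fy (x, y)) * (v - y))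
        by (field; lra).
      rewrite Rabs_mult. apply Rmult_le_compat_r. apply Rabs_pos. lra. }
  replace (F (u, v) - F (x, y) - (Fx (x, y) * (u - x) + Fy (x, y) * (v - y))) with
    ((F (u, v) - F (x, v) - Fx (x, y) * (u - x)) + (F (x, v) - F (x, y) - Fy (x, y) * (v - y))) by ring.
  eapply Rle_trans. apply Rabs_triang.
  pose proof (Rmax_l (Rabs (u - x)) (Rabs (v - y))). pose proof (Rmax_r (Rabs (u - x)) (Rabs (v - y))).
  destruct eps as [ep Hep]; simpl in *.
  apply Rle_trans with (ep / 2 * Rmax (Rabs (u - x)) (Rabs (v - y)) + ep / 2 * Rmax (Rabs (u - x)) (Rabs (v - y))).
  apply Rplus_le_compat. eapply Rle_trans. exact P1. apply Rmult_le_compat_l; lra.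
  eapply Rle_trans. exact P2. apply Rmult_le_compat_l; lra. lra.
Qed.

Lemma chain (U : pt -> Prop) (F Fx Fy : pt -> R) t : open_set U ->
  (forall p, U p -> partial_x F p (Fx p) /\ partial_y F p (Fy p)) ->
  continuous_on U Fx -> U (t, g t) ->
  is_derive (fun s => F (s, g s)) t (Fx (t, g t) + Fy (t, g t) * D1 t).
Proof.
  intros HU Hp HFx Ht. apply is_derive_Reals.
  pose proof (derivable_pt_lim_comp_2d (fun u v => F (u, v)) (fun s => s) g t _ _ 1 (D1 t)
    (diff2 U F Fx Fy t (g t) HU Hp HFx Ht)) as K.
  replace (Fx (t, g t) + Fy (t, g t) * D1 t) with (Fx (t, g t) * 1 + Fy (t, g t) * D1 t) by ring.
  apply K. apply derivable_pt_lim_id. apply is_derive_Reals. apply dg.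
Qed.

Definition BD (f : R -> R) := exists (f' : R -> R) (K : R), (forall t : R, is_derive f t (f' t)) /\
  (forall t : R, Rabs (f t) <= K) /\ (forall t : R, Rabs (f' t) <= K).

Lemma BD_plus f h : BD f -> BD h -> BD (fun t => f t + h t).
Proof.
  intros [f' [K1 [Hd1 [Hb1 Hc1]]]] [h' [K2 [Hd2 [Hb2 Hc2]]]].
  exists (fun t => f' t + h' t), (K1 + K2). split; [|split].
  - intro; apply d_plus; auto.
  - intro t. eapply Rle_trans. apply Rabs_triang. specialize (Hb1 t); specialize (Hb2 t); lra.
  - intro t. eapply Rle_trans. apply Rabs_triang. specialize (Hc1 t); specialize (Hc2 t); lra.
Qed.

Lemma BD_mult f h : BD f -> BD h -> BD (fun t => f t * h t).
Proof.
  intros [f' [K1 [Hd1 [Hb1 Hc1]]]] [h' [K2 [Hd2 [Hb2 Hc2]]]].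
  assert (0 <= K1) by (eapply Rle_trans; [apply Rabs_pos | apply (Hb1 0)]).
  assert (0 <= K2) by (eapply Rle_trans; [apply Rabs_pos | apply (Hb2 0)]).
  exists (fun t => f' t * h t + f t * h' t), (K1 * K2 + K1 * K2). split; [|split].
  - intro; apply d_mult; auto.
  - intro t. rewrite Rabs_mult. specialize (Hb1 t); specialize (Hb2 t).
    assert (Rabs (f t) * Rabs (h t) <= K1 * K2) by (apply Rmult_le_compat; auto; apply Rabs_pos).
    assert (0 <= K1 * K2) by nra. lra.
  - intro t. eapply Rle_trans. apply Rabs_triang. rewrite !Rabs_mult.
    specialize (Hb1 t); specialize (Hb2 t); specialize (Hc1 t); specialize (Hc2 t).
    apply Rplus_le_compat; apply Rmult_le_compat; auto; apply Rabs_pos.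
Qed.

Lemma BD_const c : BD (fun _ => c).
Proof.
  exists (fun _ => 0), (Rabs c). split; [|split]; intros; auto. apply d_const. apply Rle_refl.
  rewrite Rabs_R0. apply Rabs_pos.
Qed.

Lemma BD_inv f b : 0 < b -> BD f -> (forall t, b <= f t ^ 2) -> BD (fun t => / f t).
Proof.
  intros Hb [f' [K [Hd [Hb1 Hc1]]]] Hl.
  assert (Hnz : forall t, f t <> 0) by (intros t E; specialize (Hl t); rewrite E in Hl; simpl in Hl; lra).
  exists (fun t => - f' t / f t ^ 2), (Rmax (1 + / b) (K / b)). split; [|split].
  - intro t. apply is_derive_inv; auto.
  - intro t. eapply Rle_trans. 2: apply Rmax_l.
    rewrite Rabs_inv. destruct (Rle_dec 1 (Rabs (f t))).
    + assert (/ Rabs (f t) <= 1). { rewrite <- Rinv_1. apply Rinv_le_contravar; lra. }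
      assert (0 < / b) by (apply Rinv_0_lt_compat; auto). lra.
    + assert (Ha : 0 < Rabs (f t)) by (apply Rabs_pos_lt; auto).
      assert (Hsq : b <= Rabs (f t) * Rabs (f t)) by (rewrite <- Rabs_mult; specialize (Hl t); simpl in Hl; rewrite Rmult_1_r in Hl; rewrite Rabs_right; nra).
      assert (/ Rabs (f t) <= / b).
      { apply Rinv_le_contravar; auto. nra. }
      lra.
  - intro t. eapply Rle_trans. 2: apply Rmax_r.
    unfold Rdiv. rewrite Rabs_mult, Rabs_Ropp, Rabs_inv.
    rewrite (Rabs_right (f t ^ 2)) by (apply Rle_ge; apply pow2_ge_0).
    assert (0 < f t ^ 2) by (specialize (Hl t); lra).
    apply Rmult_le_compat; auto. apply Rabs_pos. left; apply Rinv_0_lt_compat; lra.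
    apply Rinv_le_contravar; auto.
Qed.

Lemma BD_D1 M : (forall x, Rabs (g x) <= M /\ Rabs (D1 x) <= M /\ Rabs (D2 x) <= M) -> BD D1.
Proof. intros Hb. exists D2, M. split; [|split]; intro t; try apply Hb. apply dD1. Qed.

Lemma chainBD (U : pt -> Prop) F M : open_set U -> (forall t, U (t, g t)) ->
  (forall x, Rabs (g x) <= M /\ Rabs (D1 x) <= M /\ Rabs (D2 x) <= M) ->
  CmB true 1 U F -> BD (fun t => F (t, g t)).
Proof.
  intros HU HG Hb [_ [HbF [Fx [Fy [Hp [[HcX [HbX _]] [HcY [HbY _]]]]]]]].
  destruct (HbF eq_refl) as [K0 H0]. destruct (HbX eq_refl) as [K1 H1]. destruct (HbY eq_refl) as [K2 H2].
  assert (0 <= M) by (eapply Rle_trans; [apply Rabs_pos | apply (Hb 0)]).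
  assert (0 <= K2) by (eapply Rle_trans; [apply Rabs_pos | apply (H2 _ (HG 0))]).
  exists (fun t => Fx (t, g t) + Fy (t, g t) * D1 t), (K0 + K1 + K2 * M). split; [|split].
  - intro t. apply (chain U F Fx Fy t); auto.
  - intro t. specialize (H0 _ (HG t)). pose proof (Rabs_pos (Fx (t, g t))). 
    assert (0 <= K1) by (eapply Rle_trans; [apply Rabs_pos | apply (H1 _ (HG 0))]). nra.
  - intro t. eapply Rle_trans. apply Rabs_triang. rewrite Rabs_mult.
    specialize (H1 _ (HG t)). specialize (H2 _ (HG t)). destruct (Hb t) as [_ [HD1 _]].
    assert (Rabs (Fy (t, g t)) * Rabs (D1 t) <= K2 * M) by (apply Rmult_le_compat; auto; apply Rabs_pos).
    assert (0 <= K0) by (eapply Rle_trans; [apply Rabs_pos | apply (H0 _ (HG 0))]). lra.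
Qed.

Lemma f2_pts u s c : 0 < u -> sin u = s -> cos u = c ->
  f2 (sqrt u) = -4 * s - 6 * c / u + 6 * s / u ^ 2.
Proof.
  intros Hu Hs Hc. unfold f2. rewrite pow2_sqrt by lra.
  replace (sqrt u ^ 4) with ((sqrt u ^ 2) ^ 2) by ring. rewrite pow2_sqrt by lra.
  rewrite Hs, Hc. reflexivity.
Qed.

Lemma D2_not_lip K : ~ (forall a b, Rabs (D2 a - D2 b) <= K * Rabs (a - b)).
Proof.
  intro H. set (L := Rabs K + 1).
  assert (HL : forall a b, Rabs (D2 a - D2 b) <= L * Rabs (a - b)).
  { intros a b. eapply Rle_trans. apply H. apply Rmult_le_compat_r. apply Rabs_pos.
    unfold L. pose proof (Rle_abs K). lra. }
  assert (L0 : 1 <= L) by (unfold L; pose proof (Rabs_pos K); lra).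
  destruct (INR_archimed 1 (L ^ 2)) as [k Hk]. lra. rewrite Rmult_1_r in Hk.
  pose proof PI2_3_2 as HPI. pose proof PI_4 as HPI4.
  assert (Hk0 : 0 <= INR k) by apply pos_INR.
  set (u1 := PI / 2 + 2 * INR k * PI). set (u2 := 3 * (PI / 2) + 2 * INR k * PI).
  assert (Hu1 : 3 / 2 < u1) by (unfold u1; nra).
  assert (Hu12 : u2 - u1 = PI) by (unfold u1, u2; lra).
  assert (Hu1L : 4 * L ^ 2 < u1) by (unfold u1; nra).
  set (a := sqrt u1). set (b := sqrt u2).
  assert (Ha : 0 < a) by (apply sqrt_lt_R0; lra). assert (Hb : 0 < b) by (apply sqrt_lt_R0; lra).
  assert (Ha2 : a ^ 2 = u1) by (apply pow2_sqrt; lra). assert (Hb2 : b ^ 2 = u2) by (apply pow2_sqrt; lra).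
  assert (HaL : 2 * L < a).
  { apply Rsqr_incrst_0. unfold Rsqr. replace (a * a) with (a ^ 2) by ring. nra. lra. lra. }
  assert (Fa : D2 a = -4 * 1 - 6 * 0 / u1 + 6 * 1 / u1 ^ 2).
  { rewrite D2_eq by lra. apply f2_pts. lra. unfold u1. rewrite sin_period. apply sin_PI2.
    unfold u1. rewrite cos_period. apply cos_PI2. }
  assert (Fb : D2 b = -4 * (-1) - 6 * 0 / u2 + 6 * (-1) / u2 ^ 2).
  { rewrite D2_eq by lra. apply f2_pts. lra. unfold u2. rewrite sin_period. apply sin_3PI2.
    unfold u2. rewrite cos_period. apply cos_3PI2. }
  specialize (HL b a). rewrite Fa, Fb in HL.
  assert (I1 : 6 * 1 / u1 ^ 2 <= 3) by (apply Rmult_le_reg_r with (u1 ^ 2); [nra | field_simplify; nra]).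
  assert (I2 : 6 * 1 / u2 ^ 2 <= 3) by (apply Rmult_le_reg_r with (u2 ^ 2); [nra | field_simplify; nra]).
  assert (Hdiff : (b - a) * (b + a) = PI) by (rewrite <- Hu12, <- Ha2, <- Hb2; ring).
  assert (Hba : 0 < b - a) by nra.
  rewrite Rabs_right in HL by lra. rewrite Rabs_right in HL.
  2: { replace (6 * (-1) / u2 ^ 2) with (- (6 * 1 / u2 ^ 2)) by (field; lra).
       replace (6 * 0 / u2) with 0 by (field; lra). replace (6 * 0 / u1) with 0 by (field; lra). lra. }
  replace (6 * (-1) / u2 ^ 2) with (- (6 * 1 / u2 ^ 2)) in HL by (field; lra).
  replace (6 * 0 / u2) with 0 in HL by (field; lra). replace (6 * 0 / u1) with 0 in HL by (field; lra).
  assert (L * (b - a) < 2). 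
  { assert (L * (b - a) * (b + a) = L * PI) by (rewrite Rmult_assoc, Hdiff; ring).
    assert (L * (b - a) * (2 * L) < L * (b - a) * (b + a)).
    { apply Rmult_lt_compat_l. nra. lra. }
    nra. }
  lra.
Qed.

Lemma CmB_weak : forall m b U f, CmB b (S m) U f -> CmB b m U f.
Proof.
  induction m; intros b U f [Hc [Hb H]].
  - split; [auto | split; [auto | exact I]].
  - split; [auto | split; [auto | ]]. destruct H as [fx [fy [Hp [H1 H2]]]].
    exists fx, fy. split; [auto | split; apply IHm; auto].
Qed.

Lemma rho_zero (U : pt -> Prop) rho t : open_set U -> U (t, g t) -> continuous_on U rho ->
  (forall p, U p -> (rho p < 0 <-> Omega2 p)) -> rho (t, g t) = 0.
Proof.
  intros HU HG Hc Hneg.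
  destruct (Rtotal_order (rho (t, g t)) 0) as [L|[E|L]]; auto; exfalso.
  - apply Hneg in L; auto. apply Om_iff in L. simpl in L. lra.
  - destruct (Hc _ HG (rho (t, g t)) L) as [d [Hd Hq]].
    destruct (HU _ HG) as [e [He Hball]].
    set (h := Rmin d e / 2).
    assert (Hh : 0 < h) by (unfold h; pose proof (Rmin_pos d e Hd He); lra).
    assert (Hh1 : h < d) by (unfold h; pose proof (Rmin_l d e); lra).
    assert (Hh2 : h < e) by (unfold h; pose proof (Rmin_r d e); lra).
    assert (Dq : dist (t, g t) (t, g t + - h) = h).
    { pose proof (dist_vert (t, g t) (- h)) as DV. simpl in DV. rewrite DV. rewrite Rabs_Ropp, Rabs_right; lra. }
    assert (Uq : U (t, g t + - h)) by (apply Hball; lra).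
    specialize (Hq _ Uq ltac:(lra)). apply Rabs_def2 in Hq.
    assert (Oq : Omega2 (t, g t + - h)) by (apply Om_iff; simpl; lra).
    apply Hneg in Oq; auto. lra.
Qed.

Lemma part_noC3 : ~ (exists U rho, uniform_defining_fun 3 Omega2 U rho).
Proof.
  intros [U [rho [[HUo [Hbd [_ [Hneg _]]]] [_ [HC [c [Hc Hgrad]]]]]]].
  destruct g_bounds as [M [HM Hb]].
  assert (HG : forall t, U (t, g t)) by (intro t; apply Hbd; apply bd_iff; reflexivity).
  destruct HC as [Hcr [_ [fx [fy [Hp [Cfx Cfy]]]]]].
  pose proof (CmB_weak _ _ _ _ Cfy) as Cfy1.
  destruct Cfx as [Hcfx [_ [fxx [fxy [Hpx [Cfxx Cfxy]]]]]].
  destruct Cfy as [Hcfy [_ [fyx [fyy [Hpy [Cfyx Cfyy]]]]]].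
  assert (Hcfxx : continuous_on U fxx) by apply Cfxx.
  assert (Hcfyx : continuous_on U fyx) by apply Cfyx.
  set (A := fun t => fx (t, g t)). set (B := fun t => fy (t, g t)).
  set (A' := fun t => fxx (t, g t) + fxy (t, g t) * D1 t).
  set (B' := fun t => fyx (t, g t) + fyy (t, g t) * D1 t).
  assert (HdA : forall t, is_derive A t (A' t)) by (intro t; apply (chain U fx fxx fxy t); auto).
  assert (HdB : forall t, is_derive B t (B' t)) by (intro t; apply (chain U fy fyx fyy t); auto).
  assert (H0 : forall t, A t + B t * D1 t = 0).
  { intro t. assert (D : is_derive (fun s => rho (s, g s)) t (A t + B t * D1 t)) by (apply (chain U rho fx fy t); auto).
    assert (D' : is_derive (fun s : R => 0) t (A t + B t * D1 t)).
    { eapply is_derive_ext. 2: exact D. intro s. simpl. apply (rho_zero U); auto. }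
    apply is_derive_unique in D'. rewrite <- D'. apply is_derive_unique. apply d_const. }
  set (bet := c ^ 2 / (1 + M ^ 2)).
  assert (Hbet : 0 < bet) by (unfold bet; apply Rdiv_lt_0_compat; nra).
  assert (Hlow : forall t, bet <= B t ^ 2).
  { intro t. destruct (Hp _ (HG t)) as [Px Py].
    specialize (Hgrad _ _ _ (HG t) Px Py). fold (A t) (B t) in Hgrad.
    assert (Hsq : c ^ 2 <= A t ^ 2 + B t ^ 2).
    { apply sqrt_le_0. nra. nra. rewrite sqrt_pow2; lra. }
    assert (EA : A t = - (B t * D1 t)) by (specialize (H0 t); lra).
    rewrite EA in Hsq. destruct (Hb t) as [_ [HD1 _]].
    assert (D1 t ^ 2 <= M ^ 2). { rewrite <- (pow2_abs (D1 t)). pose proof (Rabs_pos (D1 t)). nra. }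
    assert (c ^ 2 <= B t ^ 2 * (1 + M ^ 2)) by nra.
    unfold bet. apply Rmult_le_reg_r with (1 + M ^ 2). nra.
    replace (c ^ 2 / (1 + M ^ 2) * (1 + M ^ 2)) with (c ^ 2) by (field; nra). lra. }
  assert (HBnz : forall t, B t <> 0) by (intros t E; specialize (Hlow t); rewrite E in Hlow; simpl in Hlow; lra).
  assert (HD2 : forall t, D2 t = (-1) * (A' t + B' t * D1 t) * / B t).
  { intro t.
    assert (D : is_derive (fun s => A s + B s * D1 s) t (A' t + (B' t * D1 t + B t * D2 t))).
    { apply d_plus. auto. apply d_mult. auto. apply dD1. }
    assert (D' : is_derive (fun s : R => 0) t (A' t + (B' t * D1 t + B t * D2 t))).
    { eapply is_derive_ext. 2: exact D. intro s. apply H0. }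
    apply is_derive_unique in D'. assert (Z : Derive (fun _ : R => 0) t = 0) by (apply is_derive_unique; apply d_const).
    rewrite Z in D'. field_simplify_eq. 2: auto. lra. }
  assert (BDE : BD (fun t => (-1) * (A' t + B' t * D1 t) * / B t)).
  { apply BD_mult. apply BD_mult. apply BD_const. apply BD_plus.
    - unfold A'. apply BD_plus. apply (chainBD U fxx M); auto. apply BD_mult. apply (chainBD U fxy M); auto. apply (BD_D1 M); auto.
    - apply BD_mult. unfold B'. apply BD_plus. apply (chainBD U fyx M); auto. apply BD_mult. apply (chainBD U fyy M); auto.
      apply (BD_D1 M); auto. apply (BD_D1 M); auto.
    - apply (BD_inv B bet); auto. unfold B. apply (chainBD U fy M); auto. }
  destruct BDE as [E' [K [HdE [_ HbE]]]].
  apply (D2_not_lip K). intros a b. rewrite !HD2.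
  apply (Lip (fun t => (-1) * (A' t + B' t * D1 t) * / B t) E'); auto.
Qed.


Theorem mainTheorem8 :
  (domain Omega2 /\ exists U rho, defining_fun Cinf Omega2 U rho) /\
  (exists U rho, uniform_defining_fun 2 Omega2 U rho) /\
  positive_reach (boundary Omega2) /\
  ~ (exists U rho, uniform_defining_fun 3 Omega2 U rho).
Proof.
  split; [split|split; [|split]].
  - exact dom_Om.
  - exact part_Cinf.
  - exact part_C2.
  - exact part_reach.
  - exact part_noC3.
Qed.
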